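(* Let $a_1,\dots,a_l\in\mathbb{R}^n$, $b_1,\dots,b_l\in\mathbb{R}$ with $1\le m\le l$, let $D=\{x\in\mathbb{R}^n : \langle a_j,x\rangle\le b_j,\ j=m+1,\dots,l\}$ and $f(x)=\max_{i=1,\dots,m}[\langle a_i,x\rangle-b_i]+\delta_D(x)$, where none of the affine functions and none of the inequalities can be omitted in this representation. Let $x\in\operatorname{dom} f$ and $u\in\partial f(x)$. Then $$\operatorname{ind} f(x|u)=\{w\in\mathbb{R}^n : \exists\bar t>0\ \forall t\in(0,\bar t):\ u\in\partial f(x+tw)\}.$$
   Context: $\delta_D$ is the indicator function of $D$. For $f(x)\in\mathbb{R}$, $u\in\mathbb{R}^n$, $t>0$, $\xi\in\mathbb{R}^n$, the second-order difference quotient is $\Delta_t^2f(x|u)(\xi)=\frac{2}{t}\left[\frac{f(x+t\xi)-f(x)}{t}-\langle u,\xi\rangle\right]$, the second subderivative is $d^2f(x|u)(\xi)=\liminf_{t\searrow 0,\ \xi'\to\xi}\Delta_t^2f(x|u)(\xi')$, and the indicatrix of $f$ at $x$ relative to $u$ is $\operatorname{ind} f(x|u)=\{\xi\in\mathbb{R}^n : d^2f(x|u)(\xi)\le 1\}$. *)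

(* Defs.v *)
From HB Require Import structures.
From mathcomp Require Import all_boot all_order all_algebra.
From mathcomp Require Import all_classical all_reals all_analysis.
Set Implicit Arguments. Unset Strict Implicit. Unset Printing Implicit Defensive.
Import Order.TTheory GRing.Theory Num.Theory.
Import numFieldNormedType.Exports.
Local Open Scope classical_set_scope.
Local Open Scope ring_scope.

Definition dotv (R : realType) (n : nat) (a x : 'rV[R]_n) : R := (a *m x^T) 0 0.

Definition indic (R : realType) (n : nat) (D : set 'rV[R]_n) (x : 'rV[R]_n) : \bar R :=
  if `[< D x >] then 0%E else +oo%E.

(* Polyhedral data: indices 'I_l; the affine pieces are the indices in [A],
   the inequality constraints are the indices in [C].
   polyf a b A C x = max_{i in A} (<a_i,x> - b_i) + delta_{ {y | <a_j,y> <= b_j, j in C} }(x)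
   (the max over the empty family is -oo). *)
Definition polyD (R : realType) (n l : nat) (a : 'I_l -> 'rV[R]_n) (b : 'I_l -> R)
  (C : set 'I_l) : set 'rV[R]_n :=
  [set x | forall j, C j -> dotv (a j) x <= b j].

Definition polyf (R : realType) (n l : nat) (a : 'I_l -> 'rV[R]_n) (b : 'I_l -> R)
  (A C : set 'I_l) (x : 'rV[R]_n) : \bar R :=
  (ereal_sup [set ((dotv (a i) x - b i)%:E) | i in A] + indic (polyD a b C) x)%E.

(* Affine indices: i < m (0-based, i.e. 1..m); constraint indices: m <= j < l. *)
Definition affI (l m : nat) : set 'I_l := [set i : 'I_l | (i < m)%N].
Definition conI (l m : nat) : set 'I_l := [set i : 'I_l | (m <= i)%N].
Arguments affI : clear implicits.
Arguments conI : clear implicits.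

(* "None of the affine functions and none of the inequalities can be omitted":
   omitting any one of them changes the function f. *)
Definition irredundant (R : realType) (n l m : nat) (a : 'I_l -> 'rV[R]_n) (b : 'I_l -> R) :=
  (forall i, affI l m i ->
     polyf a b ((affI l m) `\ i) (conI l m) <> polyf a b (affI l m) (conI l m)) /\
  (forall j, conI l m j ->
     polyf a b (affI l m) ((conI l m) `\ j) <> polyf a b (affI l m) (conI l m)).

Definition edom (R : realType) (n : nat) (f : 'rV[R]_n -> \bar R) : set 'rV[R]_n :=
  [set x | f x < +oo]%E.

Definition subdiff (R : realType) (n : nat) (f : 'rV[R]_n -> \bar R) (x : 'rV[R]_n)
  : set 'rV[R]_n :=
  [set u | f x \is a fin_num /\ forall y, (f x + (dotv u (y - x)%R)%:E <= f y)%E].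

Definition diffq2 (R : realType) (n : nat) (f : 'rV[R]_n -> \bar R) (x u : 'rV[R]_n)
  (t : R) (xi : 'rV[R]_n) : \bar R :=
  ((2 / t)%:E * ((f (x + t *: xi)%R - f x) * (t^-1)%:E - (dotv u xi)%:E))%E.

Definition subderiv2 (R : realType) (n : nat) (f : 'rV[R]_n -> \bar R) (x u xi : 'rV[R]_n)
  : \bar R :=
  limf_einf (fun p : R * 'rV[R]_n => diffq2 f x u p.1 p.2)
            (filter_prod (0^'+) (nbhs xi)).

Definition indicatrix (R : realType) (n : nat) (f : 'rV[R]_n -> \bar R) (x u : 'rV[R]_n)
  : set 'rV[R]_n :=
  [set xi | (subderiv2 f x u xi <= 1)%E].

(* Main.v *)
Require Import Defs.
From HB Require Import structures.
From mathcomp Require Import all_boot all_order all_algebra.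
From mathcomp Require Import all_classical all_reals all_analysis.
From mathcomp Require Import ring lra.
Import Order.TTheory GRing.Theory Num.Theory.
Import numFieldNormedType.Exports.
Local Open Scope classical_set_scope.
Local Open Scope ring_scope.

Section S.
Variables (R : realType) (n : nat).

Lemma dotvD (c x y : 'rV[R]_n) : dotv c (x + y) = dotv c x + dotv c y.
Proof. by rewrite /dotv linearD mulmxDr mxE. Qed.

Lemma dotvZ (c y : 'rV[R]_n) t : dotv c (t *: y) = t * dotv c y.
Proof. by rewrite /dotv linearZ /= -scalemxAr mxE. Qed.

Lemma dotvN (c y : 'rV[R]_n) : dotv c (- y) = - dotv c y.
Proof. by rewrite -scaleN1r dotvZ mulN1r. Qed.

Lemma dotvB (c x y : 'rV[R]_n) : dotv c (x - y) = dotv c x - dotv c y.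
Proof. by rewrite dotvD dotvN. Qed.

Lemma dotv_cont (c : 'rV[R]_n) : continuous (fun y : 'rV[R]_n => dotv c y).
Proof.
have -> : (fun y : 'rV[R]_n => dotv c y) = (fun y => \sum_(k < n) c 0 k * y 0 k).
  apply/funext => y; rewrite /dotv !mxE; apply: eq_bigr => k _; rewrite !mxE //.
apply: continuous_big => //; first exact: add_continuous.
move=> k _ y; have := @continuousM R _ (fun=> c 0 k) (fun y : 'rV[R]_n => y 0 k) y; apply; [exact: cst_continuous | exact: coord_continuous].
Qed.

Lemma small_lin (al be : R) : 0 < al -> \forall t \near (0:R)^'+, t * be < al.
Proof.
move=> al0.
have h1 : 0 < al / (`|be| + 1) by rewrite divr_gt0 // ltr_wpDl.
near=> t.
have t0 : 0 < t by near: t; exact: nbhs_right_gt.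
have ht : t < al / (`|be| + 1) by near: t; exact: nbhs_right_lt.
move: ht; rewrite ltr_pdivlMr ?ltr_wpDl // => ht.
have : be <= `|be| by exact: ler_norm.
nra.
Unshelve. all: by end_near. Qed.
End S.

Section Rep.
Variables (R : realType) (n l m : nat) (a : 'I_l -> 'rV[R]_n) (b : 'I_l -> R).
Hypotheses (hm1 : (1 <= m)%N) (hml : (m <= l)%N).
Let F := polyf a b (affI l m) (conI l m).
Let v i y := dotv (a i) y - b i.
Let DD y := forall j : 'I_l, (m <= j)%N -> dotv (a j) y <= b j.

Lemma argmax_ex y : exists i : 'I_l, (i < m)%N /\
  forall j : 'I_l, (j < m)%N -> v j y <= v i y.
Proof.
have l0 : (0 < l)%N by apply: leq_trans hml.
pose i0 : 'I_l := Ordinal l0.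
have Pi0 : (fun i : 'I_l => (i < m)%N) i0 by [].
case: (@arg_maxP _ _ _ i0 (fun i : 'I_l => (i < m)%N) (fun i => v i y) Pi0) => i Pi Hi.
by exists i; split.
Qed.

Lemma FDin y : DD y -> exists i : 'I_l, (i < m)%N /\
  (forall j : 'I_l, (j < m)%N -> v j y <= v i y) /\ F y = (v i y)%:E.
Proof.
move=> Dy; have [i [im Hi]] := argmax_ex y.
exists i; split => //; split => //.
rewrite /F /polyf /Defs.indic asboolT; last by move=> j /= jm; apply: Dy.
rewrite adde0; apply/eqP; rewrite eq_le; apply/andP; split.
  by apply: ge_ereal_sup => _ [j /= jm <-]; rewrite lee_fin; apply: Hi.
by apply: ereal_sup_ubound; exists i.
Qed.

Lemma FDout y : ~ DD y -> F y = +oo%E.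
Proof.
move=> nD; rewrite /F /polyf /Defs.indic asboolF; last first.
  by move=> H; apply: nD => j jm; apply: (H j).
have [i [im Hi]] := argmax_ex y.
have : ((v i y)%:E <= ereal_sup [set ((dotv (a i) y - b i)%:E) | i in affI l m])%E.
  by apply: ereal_sup_ubound; exists i.
case: (ereal_sup _) => // r _.
Qed.
End Rep.

Lemma eEFinD (R : realType) (r1 r2 : R) : (r1%:E + r2%:E)%E = (r1 + r2)%:E.
Proof. by []. Qed.
Lemma eEFinM (R : realType) (r1 r2 : R) : (r1%:E * r2%:E)%E = (r1 * r2)%:E.
Proof. by []. Qed.

Lemma eEFinD2 (R : realType) (r1 r2 : R) : (r1%:E + r2%:E) = (r1 + r2)%:E :> \bar R.
Proof. by []. Qed.

Section Main.
Variables (R : realType) (n l m : nat) (a : 'I_l -> 'rV[R]_n) (b : 'I_l -> R).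
Variables (F : 'rV[R]_n -> \bar R) (x u : 'rV[R]_n) (Gx : R).
Hypothesis hFx : F x = Gx%:E.
Hypothesis hsub : forall y, (F x + (dotv u (y - x))%:E <= F y)%E.

Lemma eq_sub t w : F (x + t *: w) = (Gx + t * dotv u w)%:E -> subdiff F (x + t *: w) u.
Proof.
move=> E; rewrite /subdiff /=; split; first by rewrite E.
move=> y; have := hsub y; rewrite E hFx -EFinD; apply: le_trans.
rewrite lee_fin !dotvB dotvD dotvZ; lra.
Qed.

Lemma sub_eq t w : subdiff F (x + t *: w) u -> F (x + t *: w) = (Gx + t * dotv u w)%:E.
Proof.
case=> fin H; have := H x; have := hsub (x + t *: w).
move: fin; case: (F (x + t *: w)) => // r _.
rewrite hFx -!EFinD !lee_fin !dotvB dotvD dotvZ => h1 h2.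
congr (_%:E); lra.
Qed.

Lemma dqfin t xi r : F (x + t *: xi) = r%:E ->
  diffq2 F x u t xi = ((2 / t) * ((r - Gx) * t^-1 - dotv u xi))%:E.
Proof. by move=> E; rewrite /diffq2 E hFx. Qed.

Lemma dq0 t w : t != 0 -> F (x + t *: w) = (Gx + t * dotv u w)%:E -> diffq2 F x u t w = 0%E.
Proof.
move=> t0 E; rewrite (@dqfin _ _ _ E); congr (_%:E).
by rewrite addrAC subrr add0r (mulrC t) mulfK // subrr mulr0.
Qed.

Lemma dq2 t xi : 0 < t ->
  (forall r, F (x + t *: xi) = r%:E -> Gx + t * (dotv u xi + t) <= r) ->
  (2%:E <= diffq2 F x u t xi)%E.
Proof.
move=> t0 H.
have hs := hsub (x + t *: xi).
case E: (F (x + t *: xi)) => [r| |]; last by move: hs; rewrite E leeNy_eq hFx.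
  have h := H r E; rewrite (@dqfin t xi r) // lee_fin.
  have s0 : 0 < t^-1 by rewrite invr_gt0.
  have ts : t * t^-1 = 1 by rewrite mulfV // gt_eqF.
  rewrite mulrC; set s := t^-1 in s0 ts *.
  have h' : dotv u xi + t <= (r - Gx) * s.
    have : (dotv u xi + t) * t * s <= (r - Gx) * s by rewrite ler_pM2r //; lra.
    by rewrite -mulrA ts mulr1.
  nra.
rewrite /diffq2 E hFx addye // gt0_mulye ?lte_fin ?invr_gt0 //.
by rewrite addye // gt0_muley ?leey // lte_fin divr_gt0.
Qed.
End Main.

Lemma near_impl (R : realType) (P : Prop) (Q : R -> Prop) :
  (P -> \forall t \near (0:R)^'+, Q t) -> \forall t \near (0:R)^'+, (P -> Q t).
Proof.
case: (pselect P) => [p H|np _]; first by apply: filterS (H p) => t q _.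
by apply: nearW => t /np.
Qed.

Lemma near_eps (R : realType) (P : R -> Prop) :
  (\forall t \near (0:R)^'+, P t) -> exists2 e : R, 0 < e & forall t, 0 < t < e -> P t.
Proof.
rewrite near_withinE => /nbhs_ballP [e e0 He]; exists e => // t /andP [t0 te].
apply: He => //; rewrite /ball /= sub0r normrN gtr0_norm //.
Qed.

Lemma liminf_ge2 (R : realType) (n : nat) (f : R * 'rV[R]_n -> \bar R) (w : 'rV[R]_n) :
  filter_prod ((0:R)^'+) (nbhs w) [set p | (2%:E <= f p)%E] ->
  (2%:E <= limf_einf f (filter_prod ((0:R)^'+) (nbhs w)))%E.
Proof.
move=> HV; rewrite limf_einfE; apply: le_ereal_sup_tmp.
exists (ereal_inf (f @` [set p | (2%:E <= f p)%E])); first by exists [set p | (2%:E <= f p)%E].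
by apply: le_ereal_inf_tmp => _ [p Vp <-].
Qed.

Definition DDx (R : realType) (n l m : nat) (a : 'I_l -> 'rV[R]_n) (b : 'I_l -> R) (y : 'rV[R]_n) := forall j : 'I_l, (m <= j)%N -> dotv (a j) y <= b j.

Theorem corollary4p8 (R : realType) (n l m : nat)
  (a : 'I_l -> 'rV[R]_n) (b : 'I_l -> R)
  (hm1 : (1 <= m)%N) (hml : (m <= l)%N)
  (hirr : irredundant m a b)
  (x u : 'rV[R]_n)
  (hx : x \in edom (polyf a b (affI l m) (conI l m)))
  (hu : u \in subdiff (polyf a b (affI l m) (conI l m)) x) :
  indicatrix (polyf a b (affI l m) (conI l m)) x u =
  [set w | exists2 tbar : R, 0 < tbar &
     forall t : R, 0 < t < tbar ->
       subdiff (polyf a b (affI l m) (conI l m)) (x + t *: w) u].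
Proof.
set F := polyf a b (affI l m) (conI l m).
have hxD : forall j : 'I_l, (m <= j)%N -> dotv (a j) x <= b j.
  apply: contrapT => nD; move: hx; rewrite in_setE /edom /=.
  by rewrite /F (@FDout R n l m a b hm1 hml x nD) ltxx.
have [i0 [i0m [Hi0 hFx]]] := @FDin R n l m a b hm1 hml x hxD.
set Gx := dotv (a i0) x - b i0 in hFx.
have hsub : forall y, (F x + (dotv u (y - x))%:E <= F y)%E.
  by move: hu; rewrite in_setE => -[].
rewrite -/F in hFx.
have EQS := @eq_sub R n F x u Gx hFx hsub.
have SEQ := @sub_eq R n F x u Gx hFx hsub.
have DQ0 := @dq0 R n F x u Gx hFx.
have DQ2 := @dq2 R n F x u Gx hFx hsub.
apply/seteqP; split => w /=; last first.
  case=> tb tb0 Htb; rewrite /indicatrix /subderiv2 /= limf_einfE.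
  apply: ge_ereal_sup => _ [V [[A B] /= [FA FB] ABV] <-].
  have [e e0 He] := @near_eps R A FA.
  pose t := Num.min e tb / 2.
  have mp : 0 < Num.min e tb by rewrite lt_min e0 tb0.
  have t0 : 0 < t by rewrite divr_gt0.
  have tm : t < Num.min e tb by rewrite /t ltr_pdivrMr // ltr_pMr // ltr1n.
  have [te ttb] : t < e /\ t < tb by move: tm; rewrite lt_min => /andP.
  have At : A t by apply: He; rewrite t0 te.
  apply: le_trans (_ : diffq2 F x u t w <= 1)%E.
    by apply: ereal_inf_lbound; exists (t, w) => //; apply: ABV; split => //; exact: nbhs_singleton.
  rewrite (DQ0 t w) ?gt_eqF //; last by apply: SEQ; apply: Htb; rewrite t0 ttb.
move=> Hw.
have Hw' : (subderiv2 F x u w <= 1)%E by [].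
have no2 : ~ (2%:E <= subderiv2 F x u w)%E.
  by move=> H2; have := le_trans H2 Hw'; rewrite lee_fin; lra.
have FDO := @FDout R n l m a b hm1 hml.
have FDI := @FDin R n l m a b hm1 hml.
have eGx : Gx = dotv (a i0) x - b i0 by [].
case: (pselect (exists j : 'I_l, [/\ (m <= j)%N, dotv (a j) x = b j & 0 < dotv (a j) w])) => [[j [mj ajx ajw]]|nc1].
  exfalso; apply: no2; rewrite /subderiv2; apply: liminf_ge2.
  have Hn := cvgr_gt _ (@dotv_cont _ _ (a j) w) 0 ajw.
  exists ([set t : R | 0 < t], [set xi | 0 < dotv (a j) xi]) => /=.
    by split; [exact: nbhs_right_gt | exact: Hn].
  case=> t xi /= [t0 xi0]; apply: DQ2 => // r Er.
  have : F (x + t *: xi) = +oo%E.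
    apply: FDO => D; have := D j mj; rewrite dotvD dotvZ ajx; nra.
  by rewrite Er.
case: (pselect (exists i : 'I_l, [/\ (i < m)%N, dotv (a i) x - b i = Gx & dotv u w < dotv (a i) w])) => [[i [im aix uw]]|nc2].
  exfalso; apply: no2; rewrite /subderiv2; apply: liminf_ge2.
  set k := dotv (a i) w - dotv u w.
  have k0 : 0 < k by rewrite /k subr_gt0.
  have Hn1 := cvgr_gt _ (@dotv_cont _ _ (a i) w) _ (_ : dotv (a i) w - k / 4 < dotv (a i) w).
  have Hn2 := cvgr_lt _ (@dotv_cont _ _ u w) _ (_ : dotv u w < dotv u w + k / 4).
  exists ([set t : R | 0 < t] `&` [set t | t <= k / 2],
          [set xi | dotv (a i) w - k / 4 < dotv (a i) xi] `&` [set xi | dotv u xi < dotv u w + k / 4]) => /=.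
    split; apply: filterI.
    - exact: nbhs_right_gt.
    - by apply: nbhs_right_le; rewrite divr_gt0.
    - by apply: Hn1; lra.
    - by apply: Hn2; lra.
  case=> t xi /= [[t0 tk] [h1 h2]]; apply: DQ2 => // r Er.
  case: (pselect (DDx R n l m a b (x + t *: xi))) => [D|nD]; last by have := FDO _ nD; rewrite -/F Er.
  have [i' [i'm [Hi' Fe]]] := FDI _ D.
  move: Er; rewrite /F Fe => -[<-].
  have := Hi' i im; rewrite !dotvD !dotvZ.
  have ek : k = dotv (a i) w - dotv u w by [].
  have hq : t <= dotv (a i) xi - dotv u xi by lra.
  have : 0 <= t * (dotv (a i) xi - dotv u xi - t) by apply: mulr_ge0; lra.
  move: aix; lra.
have act_c : forall j : 'I_l, (m <= j)%N -> dotv (a j) x = b j -> dotv (a j) w <= 0.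
  move=> j mj ee; rewrite leNgt; apply/negP => h; apply: nc1; exists j; by split.
have act_a : forall i : 'I_l, (i < m)%N -> dotv (a i) x - b i = Gx -> dotv (a i) w <= dotv u w.
  move=> i1 i1m e1; rewrite leNgt; apply/negP => h3; apply: nc2; exists i1; by split.
have Hj : forall j : 'I_l, \forall t \near (0:R)^'+,
    ((m <= j)%N -> dotv (a j) x < b j -> t * dotv (a j) w < b j - dotv (a j) x) /\
    ((j < m)%N -> dotv (a j) x - b j < Gx -> t * (dotv (a j) w - dotv (a i0) w) < Gx - (dotv (a j) x - b j)).
  move=> j; apply: filterI.
  - apply: near_impl => _; apply: near_impl => lt; apply: small_lin; lra.
  - apply: near_impl => _; apply: near_impl => lt; apply: small_lin; lra.
have HQ := filter_forall (@at_right_proper_filter R 0) Hj.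
have Hall : (0:R)^'+ (fun t => F (x + t *: w) = (Gx + t * dotv u w)%:E).
  apply: (@filterS _ _ (@at_right_proper_filter R 0)) (filterI HQ (nbhs_right_gt 0)) => t [Qt t0].
  have D : DDx R n l m a b (x + t *: w).
    move=> j mj; rewrite dotvD dotvZ.
    have := hxD j mj; rewrite le_eqVlt => /orP [/eqP e|lt].
      by have := act_c j mj e; nra.
    by have := (Qt j).1 mj lt; lra.
  have [i' [i'm [Hi' Fe]]] := FDI _ D; rewrite /F Fe.
  have ei' : dotv (a i') x - b i' = Gx.
    have := Hi0 i' i'm; rewrite -/Gx le_eqVlt => /orP [/eqP //|lt].
    have := (Qt i').2 i'm lt; have := Hi' i0 i0m; rewrite !dotvD !dotvZ; lra.
  have := act_a i' i'm ei'; have := hsub (x + t *: w).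
  rewrite hFx /F Fe -EFinD lee_fin !dotvB !dotvD !dotvZ => h1 h2.
  congr (_%:E); apply/eqP; rewrite eq_le; apply/andP; split; nra.
have [e e0 He] := @near_eps R _ Hall.
exists e => // t /He E; exact: EQS.
Qed.
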